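(* For natural numbers $n,k$ with $2k\le n$ let $\overrightarrow{N}_{n,k}$ be the digraph with vertex set $\{1,\dots,n\}$ and edge set $\{(i,j):1\le i,j\le n\}\setminus\{(1,2),(3,4),\dots,(2k-1,2k)\}$. Every proper homomorphic image of $\overrightarrow{N}_{n,k}$ (i.e. every digraph $H$ for which there is a non-injective surjective homomorphism $\overrightarrow{N}_{n,k}\to H$) is isomorphic to $\overrightarrow{N}_{m,l}$ for some $m,l$ with $2l<m$. In particular, the set $\{\overrightarrow{N}_{2k,k}:k=1,2,3,\dots\}$ is an antichain under both the standard and the strong homomorphic image orderings.
   Context: A digraph is a set $D$ with a binary relation $E(D)\subseteq D\times D$ (loops allowed). A homomorphism maps edges to edges; it is strong if additionally every edge of the target between vertices of the image is the image of an edge. Standard homomorphic image ordering: $A\preceq B$ iff there is a surjective homomorphism $B\to A$; strong: iff there is a surjective strong homomorphism $B\to A$. An antichain is a set of pairwise incomparable elements. *)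

(* Defs.v *)
From mathcomp Require Import all_boot.
Set Implicit Arguments. Unset Strict Implicit. Unset Printing Implicit Defensive.

(* A digraph is a carrier type V with an edge relation E : V -> V -> Prop (loops allowed). *)

(* Edge relation of N_{n,k} on 'I_n = {0,...,n-1} (vertex i here is vertex i+1 of the paper):
   every pair (i,j) is an edge except (0,1),(2,3),...,(2k-2,2k-1),
   i.e. the paper's (1,2),(3,4),...,(2k-1,2k). *)
Definition Nrel (n k : nat) (i j : 'I_n) : Prop :=
  ~~ [&& ~~ odd i, (j : nat) == i.+1 & i < 2 * k].

Definition surj (V W : Type) (f : V -> W) : Prop := forall w, exists v, f v = w.

Definition is_hom (V W : Type) (EV : V -> V -> Prop) (EW : W -> W -> Prop) (f : V -> W) : Prop :=
  forall x y, EV x y -> EW (f x) (f y).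

Definition is_strong_hom (V W : Type) (EV : V -> V -> Prop) (EW : W -> W -> Prop)
  (f : V -> W) : Prop :=
  is_hom EV EW f /\
  forall x y, EW (f x) (f y) -> exists x' y', f x' = f x /\ f y' = f y /\ EV x' y'.

Definition hom_image_le (A B : Type) (EA : A -> A -> Prop) (EB : B -> B -> Prop) : Prop :=
  exists f : B -> A, is_hom EB EA f /\ surj f.

Definition strong_hom_image_le (A B : Type) (EA : A -> A -> Prop) (EB : B -> B -> Prop)
  : Prop :=
  exists f : B -> A, is_strong_hom EB EA f /\ surj f.

Definition dg_iso (A B : Type) (EA : A -> A -> Prop) (EB : B -> B -> Prop) : Prop :=
  exists g : A -> B, bijective g /\ forall a b, EA a b <-> EB (g a) (g b).

(* Main.v *)
Require Import Defs.
From mathcomp Require Import all_boot.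
From mathcomp Require Import zify.
From Stdlib Require Import Classical ClassicalEpsilon.

Set Implicit Arguments. Unset Strict Implicit.

Definition pb (P : Prop) : bool := if excluded_middle_informative P then true else false.
Lemma pbP P : reflect P (pb P).
Proof. rewrite /pb; case: excluded_middle_informative => h; constructor; done. Qed.

Lemma notNrel n k (i j : 'I_n) : ~ @Nrel n k i j -> [/\ ~~ odd i, (j:nat) = i.+1 & i < 2*k].
Proof.
move=> h; have : [&& ~~ odd i, (j : nat) == i.+1 & i < 2 * k].
  by apply/negPn; apply/negP.
by case/and3P => ? /eqP ? ?.
Qed.

Lemma L_ord n k H (EH : H -> H -> Prop) (f : 'I_n -> H) :
  is_hom (@Nrel n k) EH f -> forall x y, ~ EH (f x) (f y) ->
  (forall z, f z = f x -> z = x) /\ (forall z, f z = f y -> z = y).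
Proof.
move=> hf x y nE.
have nxy : ~ @Nrel n k x y by move=> /hf.
case: (notNrel nxy) => ox yx xk.
split=> z fz.
- have : ~ @Nrel n k z y by move=> /hf; rewrite fz.
  case/notNrel => _ yz _. apply: val_inj => /=; lia.
- have : ~ @Nrel n k x z by move=> /hf; rewrite fz.
  case/notNrel => _ zx _. apply: val_inj => /=; lia.
Qed.

Lemma inj_surj_bij (A B : Type) (g : A -> B) :
  injective g -> (forall b, exists a, g a = b) -> bijective g.
Proof.
move=> gi gs.
pose h b := proj1_sig (constructive_indefinite_description _ (gs b)).
have hK b : g (h b) = b := proj2_sig (constructive_indefinite_description _ (gs b)).
by exists h => [a|b]; [apply: gi; exact: hK | exact: hK].
Qed.

Lemma noninj_ex (A B : Type) (f : A -> B) : ~ injective f -> exists a b, f a = f b /\ a <> b.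
Proof.
move=> finj; apply: NNPP => hn; apply: finj => a b e; apply: NNPP => ne.
by apply: hn; exists a, b.
Qed.

Lemma part2 k k' : 0 < k -> 0 < k' -> k <> k' ->
  ~ hom_image_le (@Nrel (2*k') k') (@Nrel (2*k) k).
Proof.
move=> k0 k'0 kk [f [hf sf]].
pose h w := proj1_sig (constructive_indefinite_description _ (sf w)).
have hK w : f (h w) = w := proj2_sig (constructive_indefinite_description _ (sf w)).
have hinj : injective h by move=> a b e; rewrite -(hK a) -(hK b) e.
have c1 := leq_card _ hinj. rewrite !card_ord in c1.
have finj : ~ injective f.
  move=> fi; have := leq_card _ fi; rewrite !card_ord => c2; apply: kk; lia.
have [a [b [fab ab]]] := noninj_ex finj.
have wlt : f a < 2 * k' by [].
case: (boolP (odd (f a))) => ow.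
- have lt : (f a).-1 < 2*k' by lia.
  pose v := Ordinal lt.
  have nE : ~ @Nrel (2*k') k' v (f a).
    rewrite /Nrel /=; apply/negP; apply/negPn; apply/and3P; split; try lia.
  case: (sf v) => y fy.
  have nE' : ~ @Nrel _ k' (f y) (f a) by rewrite fy.
  have [_ H2] := L_ord hf nE'.
  by apply: ab; rewrite (H2 b (esym fab)).
- have lt : (f a).+1 < 2*k' by lia.
  pose v := Ordinal lt.
  have nE : ~ @Nrel (2*k') k' (f a) v.
    rewrite /Nrel /=; apply/negP; apply/negPn; apply/and3P; split; try lia.
  case: (sf v) => y fy.
  have nE' : ~ @Nrel _ k' (f a) (f y) by rewrite fy.
  have [H1 _] := L_ord hf nE'.
  by apply: ab; rewrite (H1 b (esym fab)).
Qed.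

Lemma part1 n k : 2 * k <= n -> forall (H : Type) (EH : H -> H -> Prop) (f : 'I_n -> H),
  is_hom (@Nrel n k) EH f -> surj f -> ~ injective f ->
  exists m l : nat, 2 * l < m /\ dg_iso (@Nrel m l) EH.
Proof.
move=> kn H EH f hf sf nif.
have [a0 [b0 [fab ab]]] := noninj_ex nif.
case: n kn f hf sf nif a0 b0 fab ab => [|n] kn f hf sf nif a0; first by case: a0.
move=> b0 fab ab.
pose F (x : nat) := f (inord x).
have FL : forall x y, x < n.+1 -> y < n.+1 -> ~ EH (F x) (F y) ->
   [/\ ~~ odd x, y = x.+1, x < 2*k, (forall z, z < n.+1 -> F z = F x -> z = x)
     & (forall z, z < n.+1 -> F z = F y -> z = y)].
  move=> x y xn yn nE.
  have nN : ~ @Nrel n.+1 k (inord x) (inord y) by move=> hN; apply: nE; exact: hf hN.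
  case: (notNrel nN); rewrite !inordK // => ox yx xk.
  have [L1 L2] := L_ord hf nE.
  split => // z zn Fz.
  + by have := L1 _ Fz => /(congr1 val); rewrite /= !inordK.
  + by have := L2 _ Fz => /(congr1 val); rewrite /= !inordK.
pose P i := pb (~ EH (F i.*2) (F i.*2.+1)).
pose S := [seq i <- iota 0 k | P i].
pose l := size S.
pose inD x := x./2 \in S.
pose fe x y := pb (F x = F y).
pose minrep x := all (fun y => ~~ fe y x) (iota 0 x).
pose R := [seq x <- iota 0 n.+1 | ~~ inD x && minrep x].
pose Dp := [seq (nth 0 S j./2).*2 + odd j | j <- iota 0 (2*l)].
pose sq := Dp ++ R.
pose m := size sq.
have S1 s : (s \in S) = (s < k) && pb (~ EH (F s.*2) (F s.*2.+1)).
  by rewrite mem_filter mem_iota /= andbC.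
have S2 : uniq S by rewrite filter_uniq // iota_uniq.
have D1 x : inD x -> x < 2 * k.
  by rewrite /inD S1 => /andP[h _]; lia.
have D2 x z : inD x -> z < n.+1 -> F z = F x -> z = x.
  move=> xD zn Fz; have := xD; rewrite /inD S1 => /andP[sk /pbP nE].
  have := FL _ _ _ _ nE; case; try lia.
  move=> _ _ _ A1 A2.
  case: (boolP (odd x)) => ox.
  - have -> : x = (x./2).*2.+1 by lia.
    apply: A2 => //; have -> : (x./2).*2.+1 = x by lia. done.
  - have -> : x = (x./2).*2 by lia.
    apply: A1 => //; have -> : (x./2).*2 = x by lia. done.
have sDp : size Dp = 2 * l by rewrite size_map size_iota.
have D3 a : a < 2 * l -> nth 0 Dp a = (nth 0 S a./2).*2 + odd a.
  by move=> al; rewrite (nth_map 0) ?size_iota // nth_iota.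
have D4 x : x \in Dp -> inD x.
  case/mapP => j; rewrite mem_iota => /andP[_ jl] ->.
  rewrite /inD; have -> : ((nth 0 S j./2).*2 + odd j)./2 = nth 0 S j./2.
    by rewrite addnC half_bit_double.
  apply: mem_nth; rewrite -/l; lia.
have D5 x : x \in sq -> x < n.+1.
  rewrite mem_cat => /orP[/D4/D1|]; first lia.
  by rewrite mem_filter mem_iota => /andP[_]; lia.
have U : uniq sq.
  rewrite cat_uniq; apply/and3P; split.
  - rewrite map_inj_in_uniq ?iota_uniq // => i j; rewrite !mem_iota => /andP[_ il] /andP[_ jl] e.
    have oe : odd i = odd j by lia.
    have he : nth 0 S i./2 = nth 0 S j./2 by lia.
    move/eqP: he; rewrite nth_uniq -/l //; try lia.
  - apply/hasPn => x; rewrite mem_filter => /andP[/andP[nd _] _]; apply/negP => /D4.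
    by rewrite (negbTE nd).
  - by rewrite filter_uniq // iota_uniq.
have Finj x y : x \in sq -> y \in sq -> F x = F y -> x = y.
  move=> xs ys e.
  case: (boolP (inD x)) => xD; first by apply: esym; apply: (D2 x y) => //; apply: D5.
  case: (boolP (inD y)) => yD; first by apply: (D2 y x) => //; apply: D5.
  have xR : x \in R by move: xs; rewrite mem_cat => /orP[/D4|//]; rewrite (negbTE xD).
  have yR : y \in R by move: ys; rewrite mem_cat => /orP[/D4|//]; rewrite (negbTE yD).
  move: xR yR; rewrite !mem_filter => /andP[/andP[_ mx] _] /andP[/andP[_ my] _].
  case: (ltngtP x y) => // c.
  - move/allP: my => /(_ x); rewrite mem_iota c /= => /(_ isT) /negP[]; exact/pbP.
  - move/allP: mx => /(_ y); rewrite mem_iota c /= => /(_ isT) /negP[]; exact/pbP.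
have sq0 : sq = Dp ++ R by [].
have nsqD a : a < 2 * l -> nth 0 sq a = (nth 0 S a./2).*2 + odd a.
  by move=> al; rewrite nth_cat sDp al D3.
have nsqR a : nth 0 sq (2 * l + a) = nth 0 R a.
  by rewrite nth_cat sDp ltnNge leq_addr /= addKn.
have msz : m = 2 * l + size R by rewrite /m size_cat sDp.
have Rex x : x < n.+1 -> ~~ inD x -> exists2 z, z \in R & F z = F x.
  move=> xn xD.
  have ex : exists z, fe z x by exists x; apply/pbP.
  case: (ex_minnP ex) => z /pbP Fz zmin.
  have zx : z <= x by apply: zmin; apply/pbP.
  exists z => //.
  rewrite mem_filter mem_iota /=; apply/andP; split; last lia.
  apply/andP; split.
  - apply/negP => zD; move/negP: xD; apply; have -> // : x = z.
    by apply: D2 => //; lia.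
  - apply/allP => y; rewrite mem_iota /= => yz; apply/negP => /pbP Fy.
    have : z <= y by apply: zmin; apply/pbP; rewrite Fy.
    lia.
pose g (a : 'I_m) := F (nth 0 sq a).
have ginj : injective g.
  move=> a b e; apply: val_inj => /=.
  have e2 : nth 0 sq a = nth 0 sq b by apply: Finj => //; apply: mem_nth.
  by move/eqP: e2; rewrite nth_uniq // => /eqP.
have Fval (x : 'I_n.+1) : F x = f x by rewrite /F inord_val.
have gsurj h : exists a, g a = h.
  case: (sf h) => x <-; rewrite -Fval.
  case: (boolP (inD x)) => xD.
  - have jl : index (x./2) S < l by rewrite index_mem.
    have al : 2 * index (x./2) S + odd x < m by rewrite msz; lia.
    exists (Ordinal al); rewrite /g /= nsqD; last lia.
    have -> : (2 * index x./2 S + odd x)./2 = index x./2 S by lia.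
    rewrite nth_index //; congr F; lia.
  - case: (Rex x (ltn_ord x) xD) => z zR Fz.
    have ir : index z R < size R by rewrite index_mem.
    have al : 2 * l + index z R < m by rewrite msz; lia.
    by exists (Ordinal al); rewrite /g /= nsqR nth_index.
have lm : 2 * l < m.
  have a0D : ~~ inD a0.
    apply/negP => aD; apply: ab; apply: val_inj; apply: esym; apply: D2 => //.
    exact: ltn_ord.
    by rewrite !Fval.
  case: (Rex a0 (ltn_ord a0) a0D) => z zR _.
  rewrite msz; have : 0 < size R by case: (R) zR.
  lia.
exists m, l; split => //; exists g; split; first exact: inj_surj_bij.
move=> a b; split.
- move=> nr; apply: NNPP => nE.
  have an : nth 0 sq a < n.+1 by apply: D5; apply: mem_nth.
  have bn : nth 0 sq b < n.+1 by apply: D5; apply: mem_nth.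
  case: (FL _ _ an bn nE) => ox yx xk _ _.
  set x := nth 0 sq a in ox yx xk an.
  have sS : x./2 \in S.
    rewrite S1; apply/andP; split; first lia.
    apply/pbP; have -> : (x./2).*2 = x by lia.
    by rewrite -yx.
  have jl : index (x./2) S < l by rewrite index_mem.
  have a2 : 2 * index (x./2) S < m by lia.
  have b2 : 2 * index (x./2) S + 1 < m by lia.
  have ea : nth 0 sq a = nth 0 sq (2 * index (x./2) S).
    rewrite [RHS]nsqD; last lia.
    have -> : (2 * index x./2 S)./2 = index x./2 S by lia.
    rewrite nth_index //; rewrite -/x; lia.
  have eb : nth 0 sq b = nth 0 sq (2 * index (x./2) S + 1).
    rewrite [RHS]nsqD; last lia.
    have -> : (2 * index x./2 S + 1)./2 = index x./2 S by lia.
    rewrite nth_index //; rewrite yx; lia.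
  move/eqP: ea; rewrite nth_uniq //; move/eqP => ea.
  move/eqP: eb; rewrite nth_uniq //; move/eqP => eb.
  move: nr; rewrite /Nrel ea eb; apply/negP; rewrite negbK.
  apply/and3P; split; lia.
- move=> E; apply/negP => /and3P [oa /eqP ba al].
  have al' : a < 2 * l by [].
  have bl : b < 2 * l by lia.
  move: E; rewrite /g nsqD // nsqD //.
  have -> : (b : nat)./2 = (a : nat)./2 by lia.
  have -> : odd b = true by lia.
  have -> : odd a = false by lia.
  have : nth 0 S a./2 \in S by apply: mem_nth; rewrite -/l; lia.
  rewrite S1 => /andP[_ /pbP nE].
  by rewrite addn0 addn1.
Qed.

Theorem proposition4p1 :
  (forall (n k : nat), 2 * k <= n ->
     forall (H : Type) (EH : H -> H -> Prop) (f : 'I_n -> H),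
       is_hom (@Nrel n k) EH f -> surj f -> ~ injective f ->
       exists m l : nat, 2 * l < m /\ dg_iso (@Nrel m l) EH)
  /\
  (forall k k' : nat, 0 < k -> 0 < k' -> k <> k' ->
     ~ hom_image_le (@Nrel (2 * k') k') (@Nrel (2 * k) k) /\
     ~ strong_hom_image_le (@Nrel (2 * k') k') (@Nrel (2 * k) k)).
Proof.
split; last first.
  move=> k k' k0 k'0 kk; split; first exact: part2.
  move=> [f [[hf _] sf]]; apply: (part2 k0 k'0 kk); by exists f.
exact: part1.
Qed.
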